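(* Let $x$ be a random vector in $\mathbb{R}^d$ and $g:\mathbb{R}^d\to[0,\infty)$ be a nonnegative lower semicontinuous function. Assume that \[\mathbb{E}[\|x\|^2]\le\beta_c\quad\text{and}\quad\mathbb{E}\Big[\frac{g(x)}{1+\|x\|^n}\Big]\le\alpha_c\] for some integer $n\ge1$ and positive numbers $\alpha_c,\beta_c$. Then \[\mathbb{E}\Big[g(x)^{\frac{1}{2\lceil n/2\rceil}}\Big]\le\big(1+\sqrt{\beta_c}\big)(2\alpha_c)^{\frac{1}{2\lceil n/2\rceil}}.\]
   Context: $\|\cdot\|$ is the Euclidean norm and $\lceil\cdot\rceil$ the ceiling function. *)

(* Defs.v *)
From HB Require Import structures.
From mathcomp Require Import all_boot all_order all_algebra.
From mathcomp Require Import all_classical all_reals all_analysis.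
Set Implicit Arguments. Unset Strict Implicit. Unset Printing Implicit Defensive.
Import Order.TTheory GRing.Theory Num.Theory.
Import numFieldNormedType.Exports.
Local Open Scope ring_scope.

Definition euclid_norm {R : realType} {d : nat} (v : 'rV[R]_d) : R :=
  Num.sqrt (\sum_(i < d) v ord0 i ^+ 2).

(* Main.v *)
Require Import Defs.
From HB Require Import structures.
From mathcomp Require Import all_boot all_order all_algebra.
From mathcomp Require Import all_classical all_reals all_analysis.
From mathcomp Require Import topology normedtype sequences measurable_realfun lebesgue_integral.
From mathcomp Require Import ring lra zify.
Import Order.TTheory GRing.Theory Num.Theory.
Import numFieldNormedType.Exports.
Local Open Scope ring_scope.

Local Open Scope classical_set_scope.
Local Open Scope ring_scope.
Section ge0_le_integral_l.
Local Open Scope ereal_scope.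
Context d (T : measurableType d) (R : realType).
Variable mu : {measure set T -> \bar R}.
Variables (f1 f2 : T -> \bar R).
Hypothesis f10 : forall x, 0 <= f1 x.
Hypothesis mf1 : measurable_fun [set: T] f1.

Import HBNNSimple.

Lemma ge0_le_integral_l : (forall x, f1 x <= f2 x) ->
  \int[mu]_x f1 x <= \int[mu]_x f2 x.
Proof.
move=> f12.
have h20 x : 0 <= f2 x by exact: le_trans (f10 x) (f12 x).
pose g1 := nnsfun_approx measurableT mf1.
rewrite (@nd_ge0_integral_lim _ _ _ _ _ g1)//; last 2 first.
  by move=> x m n mn; exact/lefP/nd_nnsfun_approx.
  by move=> x; exact: cvg_nnsfun_approx.
apply: lime_le.
  by apply: is_cvg_sintegral => // t m n mn; exact/lefP/nd_nnsfun_approx.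
near=> n; rewrite ge0_integralTE//; apply: ereal_sup_ubound => /=.
exists (g1 n) => // t; rewrite (le_trans _ (f12 _))//.
have := leey (f1 t); rewrite le_eqVlt => /predU1P[->|ftoo].
  by rewrite leey.
have h1tfin : f1 t \is a fin_num.
  by rewrite fin_numE gt_eqF/= ?lt_eqF// (lt_le_trans _ (f10 t)).
have /= := @cvg_nnsfun_approx _ _ _ _ measurableT _ mf1 (fun x _ => f10 x) t Logic.I.
rewrite -(fineK h1tfin) => /fine_cvgP[ft_near].
set u_ := (X in X --> _) => u_h1.
have <- : lim u_ = fine (f1 t) by exact/cvg_lim.
rewrite lee_fin; apply: nondecreasing_cvgn_le.
  by move=> // a b ab; rewrite /u_ /=; exact/lefP/nd_nnsfun_approx.
by apply/cvg_ex; eexists; exact: u_h1.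
Unshelve. all: by end_near. Qed.

End ge0_le_integral_l.

Section key.
Local Open Scope ereal_scope.
Context d (T : measurableType d) (R : realType).
Variable mu : {measure set T -> \bar R}.
Import HBNNSimple.

Lemma key_le (G H K : T -> R) (c : R) : (0 < c)%R ->
  (forall t, 0 <= G t)%R -> (forall t, 0 <= H t)%R -> (forall t, 0 <= K t)%R ->
  measurable_fun [set: T] K -> (forall t, G t <= c * H t + K t)%R ->
  \int[mu]_t (G t)%:E <= c%:E * \int[mu]_t (H t)%:E + \int[mu]_t (K t)%:E.
Proof.
move=> c0 G0 H0 K0 mK GHK.
rewrite ge0_integralTE; last by move=> t; rewrite lee_fin.
apply: ge_ereal_sup => _ [s sG <-].
have -> : sintegral mu s = \int[mu]_t (s t)%:E.
  by rewrite integral_nnsfun// patch_setT.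
pose s' t := (Num.max (s t - K t) 0 / c)%R.
have ms : measurable_fun [set: T] s by exact: measurable_funPT.
have ms' : measurable_fun [set: T] s'.
  apply: measurable_funM => //; apply: measurable_maxr => //.
  exact: measurable_funB.
have s'0 t : (0 <= s' t)%R by rewrite /s' divr_ge0 ?le_max ?lexx ?orbT// ltW.
apply: (@le_trans _ _ (\int[mu]_t ((c * s' t)%:E + (K t)%:E))).
  apply: ge0_le_integral => //.
  - by move=> t _; rewrite lee_fin.
  - exact/measurable_EFinP.
  - apply: emeasurable_funD; apply/measurable_EFinP => //.
    exact: measurable_funM.
  - move=> t _; rewrite -EFinD lee_fin /s' mulrC divfK ?gt_eqF//.
    by rewrite -lerBlDr le_max lexx.
rewrite ge0_integralD//; first last.
- exact/measurable_EFinP.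
- by move=> t _; rewrite lee_fin.
- by apply/measurable_EFinP; exact: measurable_funM.
- by move=> t _; rewrite lee_fin mulr_ge0// ltW.
rewrite leeD2r // (_ : (fun t => (c * s' t)%:E) = (fun t => c%:E * (s' t)%:E)); last first.
  by apply/funext => t.
rewrite ge0_integralZl//; last 2 first.
- by move=> t _; rewrite lee_fin.
- by rewrite lee_fin ltW.
apply: lee_wpmul2l; first by rewrite lee_fin ltW.
apply: ge0_le_integral_l.
- by move=> t; rewrite lee_fin.
- exact/measurable_EFinP.
move=> t; rewrite lee_fin /s' ler_pdivrMr //.
rewrite ge_max (mulr_ge0 (H0 t) (ltW c0)) andbT.
rewrite lerBlDr mulrC (le_trans _ (GHK t))//.
by have := sG t; rewrite lee_fin.
exact/measurable_EFinP.
Qed.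
End key.

Section real_lemmas.
Variable R : realType.

Lemma bern (w : R) j : 0 <= w -> 1 + j%:R * (w - 1) <= w ^+ j.
Proof.
move=> w0; elim: j => [|j IH]; first by rewrite mul0r addr0 expr0.
have h1 := mulr_ge0 (ler0n R j) (sqr_ge0 (w - 1)).
have h2 : 0 <= w * (w ^+ j - (1 + j%:R * (w - 1))) by rewrite mulr_ge0 // subr_ge0.
rewrite exprS -natr1.
nra.
Qed.

Lemma powR_inv_le (u : R) j : 0 <= u -> (0 < j)%N ->
  u `^ (1 / j%:R) <= u / j%:R + (1 - 1 / j%:R).
Proof.
move=> u0 j0.
have J0 : 0 < j%:R :> R by rewrite ltr0n.
set w := u `^ (1 / j%:R).
have uw : u = w ^+ j.
  by rewrite /w -powR_mulrn ?powR_ge0// -powRrM mul1r mulVf ?gt_eqF// powRr1.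
have := @bern w j (powR_ge0 _ _); rewrite -/w -uw => hb.
have -> : u / j%:R + (1 - 1 / j%:R) = w + (u - (1 + j%:R * (w - 1))) / j%:R.
  by field; rewrite gt_eqF.
by rewrite lerDl divr_ge0 ?subr_ge0 // ltW.
Qed.


Lemma pointwise (g N alpha beta : R) (n k : nat) :
  0 <= g -> 0 <= N -> 0 < alpha -> 0 < beta -> (n <= 2 * k)%N -> (0 < k)%N ->
  g `^ (1 / (2 * k)%N%:R) <= (2 * alpha) `^ (1 / (2 * k)%N%:R) *
    ((g / (1 + N ^+ n) / alpha) / (2 * k)%N%:R + (1 - 1 / (2 * k)%N%:R)
     + Num.sqrt beta / 2 * ((g / (1 + N ^+ n) / alpha) / k%:R + (1 - 1 / k%:R)
                            + N ^+ 2 / beta)).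
Proof.
move=> g0 N0 a0 b0 nk k0.
set m := (2 * k)%N; set p := 1 / m%:R; set s := Num.sqrt beta.
set u := g / (1 + N ^+ n) / alpha.
have D0 : 0 < 1 + N ^+ n by rewrite ltr_pwDl// exprn_ge0.
have u0 : 0 <= u by rewrite /u !divr_ge0 // ltW.
have m0 : (0 < m)%N by rewrite /m muln_gt0.
have p0 : 0 <= p by rewrite /p divr_ge0 // ler0n.
have s0 : 0 < s by rewrite /s sqrtr_gt0.
have A0 : 0 <= (2 * alpha) `^ p by exact: powR_ge0.
have e1 : g = (2 * alpha) * u * ((1 + N ^+ n) / 2).
  by rewrite /u; field; rewrite ?gt_eqF.
have step1 : g `^ p <= (2 * alpha) `^ p * u `^ p * (1 + N).
  have a2 : 0 <= 2 * alpha by rewrite mulr_ge0 // ltW.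
  have d2 : 0 <= (1 + N ^+ n) / 2 by rewrite divr_ge0 // ltW.
  rewrite {1}e1 (powRM p (mulr_ge0 a2 u0) d2) (powRM p a2 u0).
  apply: ler_wpM2l; first by rewrite mulr_ge0 // powR_ge0.
  have h1 : (1 + N ^+ n) / 2 <= (1 + N) ^+ m.
    have e1N : 1 <= 1 + N by rewrite lerDl.
    have h2 : 1 <= (1 + N) ^+ m by exact: exprn_ege1.
    have h3 : N ^+ n <= (1 + N) ^+ m.
      apply: (@le_trans _ _ ((1 + N) ^+ n)).
        by apply: lerXn2r; rewrite ?nnegrE ?addr_ge0 // lerDr.
      exact: ler_weXn2l.
    lra.
  apply: (@le_trans _ _ (((1 + N) ^+ m) `^ p)).
    by apply: ge0_ler_powR => //; rewrite nnegrE ?exprn_ge0 ?addr_ge0 // ltW.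
  rewrite -powR_mulrn ?addr_ge0 // -powRrM /p mulrC divfK ?powRr1 ?addr_ge0 //.
  by rewrite pnatr_eq0 -lt0n.
have step2 : u `^ p <= u / m%:R + (1 - 1 / m%:R) by exact: powR_inv_le.
have step3 : (u `^ p) ^+ 2 <= u / k%:R + (1 - 1 / k%:R).
  rewrite -powR_mulrn ?powR_ge0 // -powRrM.
  have -> : p * 2%:R = 1 / k%:R.
    by rewrite /p /m natrM; field; rewrite pnatr_eq0 -lt0n.
  exact: powR_inv_le.
have step4 : u `^ p * N <= s / 2 * ((u `^ p) ^+ 2 + N ^+ 2 / beta).
  have -> : beta = s ^+ 2 by rewrite /s sqr_sqrtr // ltW.
  rewrite -subr_ge0.
  have -> : s / 2 * ((u `^ p) ^+ 2 + N ^+ 2 / s ^+ 2) - u `^ p * N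
      = (s * u `^ p - N) ^+ 2 / (2 * s).
    by field; rewrite gt_eqF.
  by rewrite divr_ge0 ?sqr_ge0 // mulr_ge0 // ltW.
apply: (le_trans step1); rewrite -mulrA; apply: ler_wpM2l => //.
have : s / 2 * ((u `^ p) ^+ 2 + N ^+ 2 / beta) <= s / 2 * (u / k%:R + (1 - 1 / k%:R) + N ^+ 2 / beta).
  apply: ler_wpM2l; first by rewrite divr_ge0 // ltW.
  by rewrite lerD2r.
move=> hh; rewrite /p in step2 step4 hh * ; nra.
Qed.

End real_lemmas.


Theorem lemma4p4 (R : realType) (dT : measure_display) (T : measurableType dT)
  (P : probability T R) (d : nat) (x : T -> 'rV[R]_d)
  (g : 'rV[R]_d -> R) (n : nat) (alpha_c beta_c : R) :
  (forall i : 'I_d, measurable_fun setT (fun t => x t ord0 i)) ->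
  (forall v, 0 <= g v) ->
  lower_semicontinuous (fun v => (g v)%:E) ->
  (1 <= n)%N -> 0 < alpha_c -> 0 < beta_c ->
  (\int[P]_t ((euclid_norm (x t)) ^+ 2)%:E <= beta_c%:E)%E ->
  (\int[P]_t (g (x t) / (1 + euclid_norm (x t) ^+ n))%:E <= alpha_c%:E)%E ->
  (\int[P]_t (g (x t) `^ (1 / (2 * ((n + 1) %/ 2)%N)%:R))%:E
     <= ((1 + Num.sqrt beta_c) * (2 * alpha_c) `^ (1 / (2 * ((n + 1) %/ 2)%N)%:R))%:E)%E.
Proof.
move=> mx g0 _ n1 a0 b0 hN hH.
set k := ((n + 1) %/ 2)%N.
have k0 : (0 < k)%N by rewrite /k; lia.
have nk : (n <= 2 * k)%N by rewrite /k; lia.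
set m := (2 * k)%N.
have m0 : (0 < m)%N by rewrite /m; lia.
have mR : m%:R != 0 :> R by rewrite pnatr_eq0 -lt0n.
have kR : k%:R != 0 :> R by rewrite pnatr_eq0 -lt0n.
have mk1 : 1 / m%:R <= 1 :> R.
  by rewrite ler_pdivrMr ?ltr0n // mul1r ler1n.
have kk1 : 1 / k%:R <= 1 :> R.
  by rewrite ler_pdivrMr ?ltr0n // mul1r ler1n.
set p := 1 / m%:R.
set A := (2 * alpha_c) `^ p.
set s := Num.sqrt beta_c.
have A0 : 0 <= A by exact: powR_ge0.
have s0 : 0 < s by rewrite /s sqrtr_gt0.
pose Q t := \sum_(i < d) (x t ord0 i) ^+ 2.
have Q0 t : 0 <= Q t by apply: sumr_ge0 => i _; exact: sqr_ge0.
have eN t : euclid_norm (x t) ^+ 2 = Q t by rewrite /euclid_norm sqr_sqrtr // Q0.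
have mQ : measurable_fun [set: T] Q.
  by apply: measurable_sum => i; apply: measurable_funX; exact: mx.
pose c := A * (1 / m%:R + s / 2 / k%:R) / alpha_c.
pose C0 := A * ((1 - 1 / m%:R) + s / 2 * (1 - 1 / k%:R)).
pose C1 := A * (s / 2) / beta_c.
have c0 : 0 < c.
  have Ap : 0 < A by rewrite /A powR_gt0 // mulr_gt0.
  apply: divr_gt0 => //; apply: mulr_gt0 => //.
  by rewrite ltr_wpDr ?divr_gt0 ?ltr0n // ?divr_ge0 // ltW.
have C00 : 0 <= C0.
  rewrite /C0 mulr_ge0 // addr_ge0 ?subr_ge0 // mulr_ge0 ?subr_ge0 //.
  by rewrite divr_ge0 // ltW.
have C10 : 0 <= C1 by rewrite /C1 divr_ge0 ?mulr_ge0 ?divr_ge0 // ltW.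
have N0 t : 0 <= euclid_norm (x t) by exact: sqrtr_ge0.
have D0 t : 0 < 1 + euclid_norm (x t) ^+ n by rewrite ltr_pwDl // exprn_ge0.
have mK : measurable_fun [set: T] (fun t => C0 + C1 * Q t).
  apply: measurable_funD => //; apply: measurable_funM => //.
have pw t : g (x t) `^ p <= c * (g (x t) / (1 + euclid_norm (x t) ^+ n)) + (C0 + C1 * Q t).
  have := @pointwise R (g (x t)) (euclid_norm (x t)) alpha_c beta_c n k (g0 _) (N0 t) a0 b0 nk k0.
  rewrite eN => /le_trans; apply; rewrite le_eqVlt; apply/orP; left; apply/eqP.
  rewrite /c /C0 /C1 /A /p /m /s; field.
  by rewrite !gt_eqF // ?ltr0n // ?muln_gt0 // (D0 t).
have := @key_le _ _ R P (fun t => g (x t) `^ p)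
  (fun t => g (x t) / (1 + euclid_norm (x t) ^+ n))
  (fun t => C0 + C1 * Q t) c c0 (fun t => powR_ge0 _ _)
  (fun t => divr_ge0 (g0 _) (ltW (D0 t)))
  (fun t => addr_ge0 C00 (mulr_ge0 C10 (Q0 t))) mK pw.
move=> /le_trans; apply.
have IC : (\int[P]_t C0%:E = C0%:E)%E.
  rewrite integral_cst // -[RHS]mule1; congr (_ * _)%E; exact: probability_setT.
have IK : (\int[P]_t (C0 + C1 * Q t)%:E = C0%:E + C1%:E * \int[P]_t (Q t)%:E)%E.
  under eq_integral => t _ do rewrite EFinD.
  rewrite ge0_integralD //; first last.
  - by apply/measurable_EFinP; apply: measurable_funM.
  - by move=> t _; rewrite lee_fin mulr_ge0.
  rewrite IC; congr (_ + _)%E.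
  under eq_integral => t _ do rewrite EFinM.
  rewrite ge0_integralZl //.
  - exact/measurable_EFinP.
  - by move=> t _; rewrite lee_fin.
have hQ : (\int[P]_t (Q t)%:E <= beta_c%:E)%E.
  by under eq_integral => t _ do rewrite -eN.
rewrite IK.
apply: (le_trans (leeD (lee_wpmul2l _ hH) (leeD2l _ (lee_wpmul2l _ hQ)))).
- by rewrite lee_fin ltW.
- by rewrite lee_fin.
rewrite -!EFinM -!EFinD lee_fin le_eqVlt; apply/orP; left; apply/eqP.
rewrite /c /C0 /C1 /A /p /m /s; field.
by rewrite !gt_eqF // ?ltr0n // ?muln_gt0.
Qed.
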